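(* Let $A$ be a finite set, let $X,Y$ be upward closed subsets of $(A^*,\le_e)$, and let $a\in A$. Then: (1) $X \subseteq a^{-1}X$. (2) If $a \in \operatorname{Som}(X)$, then $X \subsetneq a^{-1}X$. (3) If $X \neq A^*$ and for all $b\in\operatorname{Som}(X)$ we have $b^{-1}X \subseteq b^{-1}Y$, then $X\subseteq Y$.
   Context: $A^*$ is the set of finite words over $A$. The embedding order $\le_e$ is defined by recursion on the length of $x$: the empty word satisfies $\emptyset \le_e y$ for all $y$; if $x = au$ with $a\in A$, $u\in A^*$, then $x\le_e y$ iff there are $v,w\in A^*$ with $y=vaw$ and $u\le_e w$. A subset $X$ is upward closed if $x\in X$, $x\le_e y$ imply $y\in X$. For $X\subseteq A^*$ and $a\in A$, $a^{-1}X := \{y\in A^* \mid ay\in X\}$, and $\operatorname{Som}(X) := \{a\in A \mid \exists u\in A^*: au \text{ is a minimal element of } X \text{ with respect to } \le_e\}$. *)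

(* Defs.v *)
From mathcomp Require Import all_boot.
Set Implicit Arguments. Unset Strict Implicit. Unset Printing Implicit Defensive.

Fixpoint emb {A : Type} (x y : seq A) : Prop :=
  match x with
  | [::] => True
  | a :: u => exists v w, y = v ++ a :: w /\ emb u w
  end.

Definition upward_closed {A : Type} (X : seq A -> Prop) : Prop :=
  forall x y, X x -> emb x y -> X y.

Definition lquot {A : Type} (a : A) (X : seq A -> Prop) : seq A -> Prop :=
  fun y => X (a :: y).

Definition minimal_in {A : Type} (X : seq A -> Prop) (x : seq A) : Prop :=
  X x /\ forall y, X y -> emb y x -> emb x y.

Definition Som {A : Type} (X : seq A -> Prop) : A -> Prop :=
  fun a => exists u, minimal_in X (a :: u).

Definition subset_of {A : Type} (X Y : seq A -> Prop) : Prop :=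
  forall x, X x -> Y x.

(* Main.v *)
Require Import Defs.
From mathcomp Require Import all_boot.
From Stdlib Require Import Classical.
From mathcomp Require Import zify.
From Stdlib Require Import Lia.
Set Implicit Arguments. Unset Strict Implicit.

Lemma emb_nil_l {A : Type} (y : seq A) : emb [::] y.
Proof. by []. Qed.

Lemma emb_refl {A : Type} (x : seq A) : emb x x.
Proof. elim: x => //= a u IH. by exists [::], u. Qed.

Lemma emb_cons_r {A : Type} (x y : seq A) c : emb x y -> emb x (c :: y).
Proof.
case: x => //= a u [v [w [-> H]]]. by exists (c :: v), w.
Qed.

Lemma emb_size {A : Type} (x y : seq A) : emb x y -> size x <= size y.
Proof.
elim: x y => //= a u IH y [v [w [-> H]]].
rewrite size_cat /=. have := IH _ H. lia.
Qed.

Lemma emb_size_eq {A : Type} (x y : seq A) : emb x y -> size x = size y -> x = y.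
Proof.
elim: x y => [|a u IH] y /=.
  by case: y.
move=> [v [w [-> H]]]. rewrite size_cat /= => Hs.
have Hu := emb_size H.
case: v Hs => [|c v] /= Hs; last by lia.
by rewrite (IH w H) //; lia.
Qed.

Lemma emb_suffix {A : Type} (v s z : seq A) :
  emb (v ++ s) z -> exists z1 z2, z = z1 ++ z2 /\ emb s z2.
Proof.
elim: v z => [|c v IH] z /=.
  by move=> H; exists [::], z.
move=> [p [q [-> H]]].
have [q1 [q2 [-> H2]]] := IH _ H.
exists (p ++ c :: q1), q2; split => //. by rewrite -catA.
Qed.

Lemma emb_trans {A : Type} (x y z : seq A) : emb x y -> emb y z -> emb x z.
Proof.
elim: x y z => //= a u IH y z [v [w [-> H]]] Hz.
have [z1 [z2 [-> H2]]] := emb_suffix Hz.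
move: H2 => /= [p [q [-> H3]]].
exists (z1 ++ p), q; split; first by rewrite catA.
exact: IH H H3.
Qed.

Lemma exists_min {A : Type} (X : seq A -> Prop) :
  forall n x, size x < n -> X x -> exists m, minimal_in X m /\ emb m x.
Proof.
elim => [|n IH] x Hs Hx; first by [].
destruct (classic (exists y, X y /\ emb y x /\ ~ emb x y)) as [[y [Hy [Hyx Hn]]]|Hno].
  have Hle := emb_size Hyx.
  have Hlt : size y < size x.
    rewrite ltn_neqAle Hle andbT. apply/eqP => E.
    apply: Hn. rewrite (emb_size_eq Hyx E). exact: emb_refl.
  have [m [Hm Hmy]] := IH y (leq_trans Hlt Hs) Hy.
  exists m; split => //. exact: emb_trans Hmy Hyx.
exists x; split; last exact: emb_refl.
split => // y Hy Hyx.
apply: NNPP => Hn. apply: Hno. by exists y.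
Qed.

Theorem lemma5p1 (A : finType) (X Y : seq A -> Prop) (a : A) :
  upward_closed X -> upward_closed Y ->
  [/\ subset_of X (lquot a X),
      (Som X a -> subset_of X (lquot a X) /\ exists y, lquot a X y /\ ~ X y)
    & ((exists w, ~ X w) ->
       (forall b, Som X b -> subset_of (lquot b X) (lquot b Y)) ->
       subset_of X Y)].
Proof.
move=> HX HY.
have P1 : subset_of X (lquot a X).
  move=> x Hx. apply: (HX x) => //. apply: emb_cons_r. exact: emb_refl.
split => //.
  move=> [u [Hu Hmin]]; split => //.
  exists u; split => // Xu.
  have := emb_size (Hmin u Xu (emb_cons_r a (emb_refl u))).
  rewrite /=. lia.
move=> [w Hw] Hsom x Hx.
have [m [[Xm Hmin] Hmx]] := exists_min (ltnSn (size x)) Hx.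
case: m Xm Hmin Hmx => [|b u] Xm Hmin Hmx.
  by exfalso; apply: Hw; apply: (HX [::]).
have Hb : Som X b by exists u.
have := Hsom b Hb u Xm. rewrite /lquot => Yb.
exact: HY Yb Hmx.
Qed.
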